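(* Let $d=2$, $X\sim\mathcal{N}(0,I_2)$ independent of $\beta$, $\bar\beta=(1,0)$ and $\beta=\bar\beta+\epsilon$ with $\epsilon=(1,-1)$ or $\epsilon=(-1,1)$ each with probability $1/2$ (so $\epsilon$ and $-\epsilon$ have the same distribution). Then no solution $\hat\beta^{\mathrm{RLHF}}$ of the moment equation $\mathbb{E}_X[\sigma(X^\top\hat\beta^{\mathrm{RLHF}})X]=\mathbb{E}_X[\mathbb{E}_\beta[\sigma(X^\top\beta)]X]$ is a scalar multiple of $\bar\beta$; in particular the RLHF estimator does not recover the direction of $\bar\beta$ even though the heterogeneity is symmetric. *)

(* Defs.v *)
From HB Require Import structures.
From mathcomp Require Import all_boot all_order all_algebra.
From mathcomp Require Import all_classical all_reals all_analysis.
Set Implicit Arguments. Unset Strict Implicit. Unset Printing Implicit Defensive.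
Import Order.TTheory GRing.Theory Num.Theory.
Local Open Scope ring_scope.

Definition sigmoid {R : realType} (t : R) : R := (1 + expR (- t))^-1.

Definition dot2 {R : realType} (x y : R * R) : R := x.1 * y.1 + x.2 * y.2.
Definition addv2 {R : realType} (x y : R * R) : R * R := (x.1 + y.1, x.2 + y.2).
Definition scalev2 {R : realType} (c : R) (x : R * R) : R * R := (c * x.1, c * x.2).

Definition gauss2 (R : realType) := (normal_prob (0:R) 1 \x normal_prob (0:R) 1)%E.

Arguments gauss2 R : clear implicits.

Definition betabar {R : realType} : R * R := (1, 0).
Definition eps0 {R : realType} : R * R := (1, -1).

(* E_beta[ sigma(x^T beta) ] with beta = betabar + eps, eps = +-eps0 w.p. 1/2 *)
Definition Ebeta_sigmoid {R : realType} (x : R * R) : R :=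
  2^-1 * sigmoid (dot2 x (addv2 betabar eps0))
  + 2^-1 * sigmoid (dot2 x (addv2 betabar (scalev2 (-1) eps0))).

(* Main.v *)
Require Import Defs.
From HB Require Import structures.
From mathcomp Require Import all_boot all_order all_algebra.
From mathcomp Require Import all_classical all_reals all_analysis.
From mathcomp Require Import measurable_realfun ring lra.
Import Order.TTheory GRing.Theory Num.Theory.
Import numFieldNormedType.Exports.
Local Open Scope ring_scope.
Local Open Scope classical_set_scope.

Section dens.
Context (R : realType).
Local Notation mu := (@lebesgue_measure R).
Local Notation N := (normal_prob (0:R) 1).

Lemma normal_dens (f : R -> \bar R) : (forall x, (0 <= f x)%E) ->
  measurable_fun [set: R] f ->
  (\int[N]_x f x = \int[mu]_x (f x * (normal_pdf 0 1 x)%:E))%E.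
Proof.
move=> f0 mf.
rewrite -(Radon_Nikodym_SigmaFinite.change_of_variables (normal_prob_dominates 0 1)) //.
apply: ae_eq_integral => //.
- apply: emeasurable_funM => //.
  apply: (measurable_int mu).
  exact: Radon_Nikodym_SigmaFinite.f_integrable (normal_prob_dominates 0 1).
- apply: emeasurable_funM => //; apply/measurable_EFinP.
  exact: measurable_normal_pdf.
- apply: ae_eqe_mul2l.
  apply: integral_ae_eq => //.
  + exact: Radon_Nikodym_SigmaFinite.f_integrable (normal_prob_dominates 0 1).
  + by apply/measurable_EFinP; exact: measurable_normal_pdf.
  + move=> E _ mE.
    by rewrite -Radon_Nikodym_SigmaFinite.f_integral //; exact: normal_prob_dominates.
Qed.


Lemma abs_le_pdf (x : R) :
  `|x| * normal_pdf 0 1 x <= (normal_peak 1 / normal_peak 2) * normal_pdf 0 2 x.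
Proof.
rewrite !normal_pdfE ?oner_neq0 ?pnatr_eq0 //.
have p2 : normal_peak (2:R) != 0 by rewrite gt_eqF // normal_peak_gt0 // pnatr_eq0.
rewrite [X in _ <= X]mulrA divfK // mulrCA.
rewrite ler_pM2l ?normal_peak_gt0 ?oner_neq0 //.
rewrite /normal_fun !subr0.
have -> : - x ^+ 2 / (2 ^+ 2 *+ 2) = - x ^+ 2 / (1 ^+ 2 *+ 2) + (3 / 8) * x ^+ 2 :> R.
  by field.
rewrite expRD mulrC ler_pM2l ?expR_gt0 //.
apply: le_trans (expR_ge1Dx _).
have : 0 <= (`|x| - 4/3) ^+ 2 by rewrite sqr_ge0.
rewrite -(real_normK (num_real x)).
nra.
Qed.

Lemma abs_N_fin : (\int[N]_x (`|x|)%:E < +oo)%E.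
Proof.
rewrite normal_dens //; last first.
  by apply/measurable_EFinP; exact: normr_measurable.
apply: (@le_lt_trans _ _ (\int[mu]_x ((normal_peak 1 / normal_peak 2)%:E * (normal_pdf 0 2 x)%:E))%E).
  apply: ge0_le_integral => //.
  - by move=> x _; rewrite mule_ge0 // lee_fin normal_pdf_ge0.
  - apply: emeasurable_funM; apply/measurable_EFinP; [exact: normr_measurable|exact: measurable_normal_pdf].
  - apply: emeasurable_funM; apply/measurable_EFinP => //; exact: measurable_normal_pdf.
  - by move=> x _; rewrite -!EFinM lee_fin abs_le_pdf.
rewrite ge0_integralZl //.
- by rewrite integral_normal_pdf mule1 ltry.
- by apply/measurable_EFinP; exact: measurable_normal_pdf.
- by move=> x _; rewrite lee_fin normal_pdf_ge0.
- by rewrite lee_fin divr_ge0 // normal_peak_ge0.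
Qed.


Lemma normal_pdfN (x : R) : normal_pdf 0 1 (- x) = normal_pdf 0 1 x.
Proof. by rewrite !normal_pdfE ?oner_neq0 // /normal_fun !subr0 sqrrN. Qed.

Lemma normal_probN (A : set R) : measurable A ->
  N ((-%R) @^-1` A) = N A.
Proof.
move=> mA.
rewrite /normal_prob.
transitivity (\int[mu]_(x in (-%R : _ -> measurableTypeR R) @^-1` A) ((fun y => (normal_pdf 0 1 y)%:E) \o (-%R)) x)%E.
  by apply: eq_integral => x _ /=; rewrite normal_pdfN.
rewrite -ge0_integral_pushforward //.
- apply: eq_measure_integral => //= B mB _; exact: (lebesgue_measureN mB).
- apply: measurableT_comp => //; apply: measurable_funTS; exact: measurable_normal_pdf.
- by move=> y _; rewrite lee_fin normal_pdf_ge0.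
Qed.

Lemma normal_prob0 (a : R) : N [set a] = 0%E.
Proof.
have := @normal_prob_dominates R 0 1.
move/null_content_dominatesP => H.
by apply: H => //; exact: lebesgue_measure_set1.
Qed.


Local Notation G := (gauss2 R).
Local Notation T := (measurableTypeR R).

Definition phi1 (x : T * T) : T * T := (- x.1, x.2).
Definition phi2 (x : T * T) : T * T := (x.1, - x.2).

Lemma measurable_phi1 : measurable_fun [set: T * T] phi1.
Proof.
apply: measurable_fun_pair => //=.
apply: measurableT_comp => //; exact: measurable_funN.
Qed.

Lemma measurable_phi2 : measurable_fun [set: T * T] phi2.
Proof.
apply: measurable_fun_pair => //=.
apply: measurableT_comp => //; exact: measurable_funN.
Qed.

Lemma G_phi1 (X : set (T * T)) : measurable X -> G (phi1 @^-1` X) = G X.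
Proof.
move=> mX.
apply/esym.
apply: (@product_measure_unique _ _ T T R N N (pushforward G phi1)); last exact: mX.
  exact: measurable_phi1.
move=> ? A B mA mB.
rewrite /pushforward /=.
transitivity (G (((-%R) @^-1` A) `*` B)).
  by congr (G _); apply/seteqP; split => -[x y].
rewrite /gauss2 product_measure1E //; last first.
  by rewrite -[X in measurable X]setTI; exact: oppr_measurable.
by congr (_ * _)%E; exact: normal_probN.
Qed.

Lemma G_phi2 (X : set (T * T)) : measurable X -> G (phi2 @^-1` X) = G X.
Proof.
move=> mX.
apply/esym.
apply: (@product_measure_unique _ _ T T R N N (pushforward G phi2)); last exact: mX.
  exact: measurable_phi2.
move=> ? A B mA mB.
rewrite /pushforward /=.
transitivity (G (A `*` ((-%R) @^-1` B))).
  by congr (G _); apply/seteqP; split => -[x y].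
rewrite /gauss2 product_measure1E //; last first.
  by rewrite -[X in measurable X]setTI; exact: oppr_measurable.
by congr (_ * _)%E; exact: normal_probN.
Qed.


Lemma int_transfer (phi : T * T -> T * T) (mphi : measurable_fun [set: T * T] phi)
  (Hphi : forall X, measurable X -> G (phi @^-1` X) = G X)
  (f : T * T -> \bar R) : measurable_fun [set: T * T] f ->
  G.-integrable [set: T * T] (f \o phi) ->
  (\int[G]_x (f \o phi) x = \int[G]_x f x)%E.
Proof.
move=> mf intf.
transitivity (\int[pushforward G phi]_x f x)%E; last first.
  apply: eq_measure_integral => //= A mA _.
  exact: Hphi.
by rewrite integral_pushforward.
Qed.


Lemma G_snd_fin : (\int[G]_x (`|x.2|)%:E < +oo)%E.
Proof.
have -> : (\int[G]_x (`|x.2|)%:E = \int[pushforward G snd]_y (`|y|)%:E)%E.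
  rewrite ge0_integral_pushforward //=.
  by apply/measurable_EFinP; exact: normr_measurable.
apply: le_lt_trans abs_N_fin.
rewrite le_eqVlt; apply/orP; left; apply/eqP.
apply: eq_measure_integral => /= B mB _.
rewrite /pushforward /=.
transitivity ((N \x N)%E (setT `*` B)).
  by apply: congr1; apply/seteqP; split => -[x y] //=; case.
rewrite (@product_measure1E _ _ _ _ R N N setT B measurableT mB).
have N1 : N setT = 1%E by exact: probability_setT.
rewrite -[RHS]mul1e; congr (_ * _)%E; exact: N1.
Qed.

Lemma G_integrable (h : T * T -> R) : measurable_fun [set: T * T] h ->
  (forall x, `|h x| <= `|x.2|) -> G.-integrable [set: T * T] (EFin \o h).
Proof.
move=> mh hle.
apply: (@le_integrable _ _ _ G _ _ _ (EFin \o (fun x : T * T => `|x.2|))) => //.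
- by apply/measurable_EFinP.
- by move=> x _ /=; rewrite lee_fin normr_id hle.
- apply/integrableP; split.
    apply/measurable_EFinP; apply: measurableT_comp => //; exact: normr_measurable.
  under eq_integral do rewrite /= normr_id.
  exact: G_snd_fin.
Qed.


Definition gfun (x : T * T) : R := Ebeta_sigmoid x * x.2.

Lemma T_formula (x : T * T) :
  gfun x + gfun (phi1 x) + gfun (phi2 x) + gfun (phi1 (phi2 x)) =
  x.2 * (expR x.2 - 1) * expR x.2 * (expR (x.1 + x.1) - 1) ^+ 2 /
   ((expR x.2 + 1) * (expR x.2 * expR (x.1 + x.1) + 1) * (expR x.2 + expR (x.1 + x.1))).
Proof.
case: x => a b.
rewrite /gfun /Ebeta_sigmoid /dot2 /addv2 /scalev2 /betabar /eps0 /sigmoid /phi1 /phi2 /=.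
have E1 : expR (- (a * (1 + 1) + b * (0 - 1))) = expR b * (expR (a + a))^-1.
  by rewrite -expRN -expRD; congr expR; ring.
have E2 : expR (- (a * (1 + -1 * 1) + b * (0 + -1 * -1))) = (expR b)^-1.
  by rewrite -expRN; congr expR; ring.
have E3 : expR (- (- a * (1 + 1) + b * (0 - 1))) = expR b * expR (a + a).
  by rewrite -expRD; congr expR; ring.
have E4 : expR (- (- a * (1 + -1 * 1) + b * (0 + -1 * -1))) = (expR b)^-1.
  by rewrite -expRN; congr expR; ring.
have E5 : expR (- (a * (1 + 1) + - b * (0 - 1))) = (expR b * expR (a + a))^-1.
  by rewrite -expRD -expRN; congr expR; ring.
have E6 : expR (- (a * (1 + -1 * 1) + - b * (0 + -1 * -1))) = expR b.
  by congr expR; ring.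
have E7 : expR (- (- a * (1 + 1) + - b * (0 - 1))) = expR (a + a) * (expR b)^-1.
  by rewrite -expRN -expRD; congr expR; ring.
have E8 : expR (- (- a * (1 + -1 * 1) + - b * (0 + -1 * -1))) = expR b.
  by congr expR; ring.
rewrite E1 E2 E3 E4 E5 E6 E7 E8.
have U0 : 0 < expR b := expR_gt0 b.
have V0 : 0 < expR (a + a) := expR_gt0 _.
set U := expR b; set V := expR (a + a).
field.
by apply/and5P; split; apply: lt0r_neq0; rewrite ?addr_gt0 ?mulr_gt0 ?ltr01.
Qed.


Lemma T_ge0 (x : T * T) :
  0 <= x.2 * (expR x.2 - 1) * expR x.2 * (expR (x.1 + x.1) - 1) ^+ 2 /
   ((expR x.2 + 1) * (expR x.2 * expR (x.1 + x.1) + 1) * (expR x.2 + expR (x.1 + x.1))).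
Proof.
case: x => a b /=.
have U0 := expR_gt0 b; have V0 := expR_gt0 (a + a).
have H : 0 <= b * (expR b - 1).
  have [b0|b0] := leP 0 b.
    by rewrite mulr_ge0 // subr_ge0 -[1]expR0 ler_expR.
  apply: mulr_le0; first exact: ltW.
  by rewrite subr_le0 -[1]expR0 ler_expR ltW.
apply: divr_ge0.
  apply: mulr_ge0; last exact: sqr_ge0.
  by apply: mulr_ge0 => //; exact: ltW.
apply: mulr_ge0; first apply: mulr_ge0.
- by apply: addr_ge0 => //; exact: ltW.
- by apply: addr_ge0 => //; apply: mulr_ge0; exact: ltW.
- by apply: addr_ge0; exact: ltW.
Qed.

Lemma T_gt0 (x : T * T) : x.1 != 0 -> x.2 != 0 ->
  0 < x.2 * (expR x.2 - 1) * expR x.2 * (expR (x.1 + x.1) - 1) ^+ 2 /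
   ((expR x.2 + 1) * (expR x.2 * expR (x.1 + x.1) + 1) * (expR x.2 + expR (x.1 + x.1))).
Proof.
case: x => a b /= a0 b0.
have U0 := expR_gt0 b; have V0 := expR_gt0 (a + a).
have H : 0 < b * (expR b - 1).
  have [b1|b1] := ltP 0 b.
    by rewrite mulr_gt0 // subr_gt0 expR_gt1.
  have b2 : b < 0 by rewrite lt_neqAle b0 b1.
  by rewrite nmulr_rgt0 // subr_lt0 expR_lt1.
have H2 : 0 < (expR (a + a) - 1) ^+ 2.
  rewrite exprn_even_gt0 //= subr_eq0.
  apply/negP => /eqP E.
  have : a + a = 0 by rewrite -[a + a]expRK E ln1.
  by move/eqP; rewrite -mulr2n mulrn_eq0 (negbTE a0).
apply: divr_gt0.
  by apply: mulr_gt0 => //; apply: mulr_gt0.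
apply: mulr_gt0; first apply: mulr_gt0.
- exact: addr_gt0.
- by apply: addr_gt0 => //; apply: mulr_gt0.
- exact: addr_gt0.
Qed.


Lemma continuous_sigmoid : continuous (@sigmoid R).
Proof.
move=> t; rewrite /sigmoid.
apply: (@continuousV _ _ (fun t => 1 + expR (- t))).
  by rewrite lt0r_neq0 // addr_gt0 // expR_gt0.
apply: cvgD; first exact: cvg_cst.
apply: continuous_comp; first exact: (@continuousN _ R^o).
exact: continuous_expR.
Qed.

Lemma measurable_sigmoid : measurable_fun [set: R] (@sigmoid R).
Proof. exact: continuous_measurable_fun continuous_sigmoid. Qed.

Lemma measurable_dot2 (v : R * R) : measurable_fun [set: T * T] (fun x : T * T => dot2 x v).
Proof.
rewrite /dot2; apply: measurable_funD.
  by apply: measurable_funM => //; exact: measurable_fst.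
by apply: measurable_funM => //; exact: measurable_snd.
Qed.

Lemma measurable_gfun : measurable_fun [set: T * T] gfun.
Proof.
rewrite /gfun /Ebeta_sigmoid; apply: measurable_funM; last exact: measurable_snd.
apply: measurable_funD; apply: measurable_funM => //;
  apply: measurableT_comp; (exact: measurable_sigmoid || exact: measurable_dot2).
Qed.


Lemma sigmoid_ge0 (t : R) : 0 <= sigmoid t.
Proof. by rewrite /sigmoid invr_ge0 addr_ge0 // expR_ge0. Qed.

Lemma sigmoid_le1 (t : R) : sigmoid t <= 1.
Proof.
rewrite /sigmoid invf_le1 ?addr_gt0 ?expR_gt0 //.
by rewrite lerDl expR_ge0.
Qed.

Lemma Ebeta_abs (x : T * T) : `|Ebeta_sigmoid x| <= 1.
Proof.
rewrite /Ebeta_sigmoid ger0_norm; last first.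
  by rewrite addr_ge0 // mulr_ge0 // ?sigmoid_ge0 // invr_ge0.
have h1 := sigmoid_le1 (dot2 x (addv2 betabar eps0)).
have h2 := sigmoid_le1 (dot2 x (addv2 betabar (scalev2 (-1) eps0))).
lra.
Qed.

Lemma gfun_abs (x : T * T) : `|gfun x| <= `|x.2|.
Proof.
rewrite /gfun normrM -[leRHS]mul1r ler_wpM2r //; exact: Ebeta_abs.
Qed.

Lemma integrable_gphi (phi : T * T -> T * T) : measurable_fun [set: T * T] phi ->
  (forall x, `|(phi x).2| = `|x.2|) ->
  G.-integrable [set: T * T] (EFin \o (gfun \o phi)).
Proof.
move=> mphi hphi; apply: G_integrable.
  by apply: measurableT_comp => //; exact: measurable_gfun.
by move=> x /=; rewrite -hphi gfun_abs.
Qed.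


Lemma G_setT : G setT = 1%E.
Proof.
rewrite -setXTT /gauss2.
rewrite (@product_measure1E _ _ _ _ R N N setT setT measurableT measurableT).
have N1 : N setT = 1%E by exact: probability_setT.
rewrite -[RHS]mul1e; congr (_ * _)%E; exact: N1.
Qed.

Lemma fL_zero (c : R) :
  (\int[G]_x (sigmoid (dot2 x (scalev2 c betabar)) * x.2)%:E = 0)%E.
Proof.
set fL := fun x : T * T => sigmoid (dot2 x (scalev2 c betabar)) * x.2.
have mfL : measurable_fun [set: T * T] fL.
  apply: measurable_funM; last exact: measurable_snd.
  apply: measurableT_comp; [exact: measurable_sigmoid | exact: measurable_dot2].
have bfL x : `|fL x| <= `|x.2|.
  rewrite /fL normrM -[leRHS]mul1r ler_wpM2r // ger0_norm ?sigmoid_ge0 //.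
  exact: sigmoid_le1.
have intfL : G.-integrable [set: T * T] (EFin \o fL) by exact: G_integrable.
have intfL2 : G.-integrable [set: T * T] ((EFin \o fL) \o phi2).
  apply: (@G_integrable (fL \o phi2)).
    by apply: measurableT_comp => //; exact: measurable_phi2.
  by move=> [a b]; apply: le_trans (bfL _) _; rewrite /= normrN.
have h := @int_transfer phi2 measurable_phi2 G_phi2 (EFin \o fL) ltac:(by apply/measurable_EFinP) intfL2.
rewrite (eq_integral (fun x => ((-1)%:E * (fL x)%:E)%E)) in h; last first.
  move=> [a b] _ /=; rewrite -EFinM; congr EFin.
  rewrite /fL /phi2 /dot2 /scalev2 /= !mulr0 !addr0.
  by rewrite mulrN mulN1r.
rewrite integralZl // in h.
have fin := integrable_fin_num measurableT intfL.
move: h fin; rewrite /=.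
set I := (\int[G]_x (fL x)%:E)%E.
case: I => [r| |] //= h _.
move: h; rewrite -EFinM => /eqP; rewrite eqe => /eqP h.
by congr EFin; lra.
Qed.


Definition Tf (x : T * T) : R :=
  gfun x + gfun (phi1 x) + gfun (phi2 x) + gfun (phi1 (phi2 x)).

Lemma Tf_ge0 x : 0 <= Tf x.
Proof. rewrite /Tf T_formula; exact: T_ge0. Qed.

Lemma Tf_gt0 x : x.1 != 0 -> x.2 != 0 -> 0 < Tf x.
Proof. by move=> h1 h2; rewrite /Tf T_formula; exact: T_gt0. Qed.

Lemma int_Tf : (\int[G]_x (Tf x)%:E = 4%:E * \int[G]_x (gfun x)%:E)%E.
Proof.
have mphi12 : measurable_fun [set: T * T] (phi1 \o phi2).
  by apply: measurableT_comp; [exact: measurable_phi1 | exact: measurable_phi2].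
have i0 : G.-integrable [set: T * T] (EFin \o (gfun \o id)).
  by apply: integrable_gphi.
have i1 : G.-integrable [set: T * T] (EFin \o (gfun \o phi1)).
  by apply: integrable_gphi; [exact: measurable_phi1 | move=> [a b]; rewrite /= ?normrN].
have i2 : G.-integrable [set: T * T] (EFin \o (gfun \o phi2)).
  by apply: integrable_gphi; [exact: measurable_phi2 | move=> [a b]; rewrite /= ?normrN].
have i3 : G.-integrable [set: T * T] (EFin \o (gfun \o (phi1 \o phi2))).
  by apply: integrable_gphi; [exact: mphi12 | move=> [a b]; rewrite /= ?normrN].
have e1 : (\int[G]_x (gfun (phi1 x))%:E = \int[G]_x (gfun x)%:E)%E.
  exact: (@int_transfer phi1 measurable_phi1 G_phi1 (EFin \o gfun)
    ltac:(by apply/measurable_EFinP; exact: measurable_gfun) i1).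
have e2 : (\int[G]_x (gfun (phi2 x))%:E = \int[G]_x (gfun x)%:E)%E.
  exact: (@int_transfer phi2 measurable_phi2 G_phi2 (EFin \o gfun)
    ltac:(by apply/measurable_EFinP; exact: measurable_gfun) i2).
have e3 : (\int[G]_x (gfun (phi1 (phi2 x)))%:E = \int[G]_x (gfun x)%:E)%E.
  rewrite -e1.
  exact: (@int_transfer phi2 measurable_phi2 G_phi2 (EFin \o (gfun \o phi1))
    ltac:(by apply/measurable_EFinP; apply: measurableT_comp;
           [exact: measurable_gfun | exact: measurable_phi1]) i3).
transitivity (\int[G]_x ((gfun x)%:E + (gfun (phi1 x))%:E + (gfun (phi2 x))%:E
   + (gfun (phi1 (phi2 x)))%:E))%E.
  by apply: eq_integral => x _; rewrite /Tf !EFinD.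
have i01 : G.-integrable [set: T * T] (fun x => (gfun x)%:E + (gfun (phi1 x))%:E)%E.
  exact: (integrableD _ i0 i1).
have i012 : G.-integrable [set: T * T]
    (fun x => (gfun x)%:E + (gfun (phi1 x))%:E + (gfun (phi2 x))%:E)%E.
  exact: (integrableD _ i01 i2).
have s3 := integralD measurableT i012 i3.
have s2 := integralD measurableT i01 i2.
have s1 := integralD measurableT i0 i1.
rewrite s3 s2 s1.
rewrite e1 e2 e3.
set I := (\int[G]_x (gfun x)%:E)%E.
have fin : I \is a fin_num.
  exact: (integrable_fin_num measurableT i0).
rewrite -(fineK fin) -!EFinD -EFinM; congr EFin; ring.
Qed.


Lemma measurable_Tf : measurable_fun [set: T * T] Tf.
Proof.
have mg := measurable_gfun.
rewrite /Tf; apply: measurable_funD; first apply: measurable_funD; first apply: measurable_funD.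
- exact: mg.
- by apply: measurableT_comp => //; exact: measurable_phi1.
- by apply: measurableT_comp => //; exact: measurable_phi2.
- apply: measurableT_comp => //; apply: measurableT_comp.
    exact: measurable_phi1.
  exact: measurable_phi2.
Qed.

Lemma rect_negl (A B : set T) : measurable A -> measurable B ->
  (N A = 0 \/ N B = 0)%E -> G.-negligible (A `*` B).
Proof.
move=> mA mB h; exists (A `*` B); split => //.
  exact: measurableX.
rewrite /gauss2 (@product_measure1E _ _ _ _ R N N A B mA mB).
case: h => h.
  by transitivity (0 * N B)%E; [congr (_ * _)%E; exact: h | exact: mul0e].
by transitivity (N A * 0)%E; [congr (_ * _)%E; exact: h | exact: mule0].
Qed.

Lemma main_contra (c : R) :
  (\int[G]_x (sigmoid (dot2 x (scalev2 c betabar)) * x.2)%:E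
     = \int[G]_x (Ebeta_sigmoid x * x.2)%:E)%E -> False.
Proof.
move=> H.
have Ig : (\int[G]_x (gfun x)%:E = 0)%E.
  exact: (etrans (esym H) (fL_zero c)).
have IT : (\int[G]_x (Tf x)%:E = 0)%E by rewrite int_Tf Ig mule0.
have IT' : (\int[G]_x `|(EFin \o Tf) x| = 0)%E.
  rewrite -IT; apply: eq_integral => x _ /=.
  by rewrite ger0_norm // Tf_ge0.
have mT : measurable_fun [set: T * T] (EFin \o Tf).
  by apply/measurable_EFinP; exact: measurable_Tf.
have := (ae_eq_integral_abs G measurableT mT).1 IT'.
move=> hN.
have nL1 : G.-negligible ([set: T] `*` [set 0]).
  by apply: rect_negl => //; right; exact: normal_prob0.
have nL2 : G.-negligible ([set 0] `*` [set: T]).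
  by apply: rect_negl => //; left; exact: normal_prob0.
have : G.-negligible [set: T * T].
  apply: negligibleS (negligibleU (negligibleU hN nL1) nL2).
  move=> [a b] _.
  have [a0|a0] := eqVneq a 0; first by right; split.
  have [b0|b0] := eqVneq b 0; first by left; right; split.
  left; left => /= /(_ I) /eqP.
  by rewrite eqe gt_eqF // (Tf_gt0 (a, b) a0 b0).
move/(measure_negligible measurableT) => h0.
have : (1 = 0 :> \bar R)%E by rewrite -G_setT; exact: h0.
by move/eqP; rewrite eqe oner_eq0.
Qed.

End dens.

Theorem mainTheorem9 (R : realType) (bhat : R * R) :
  (\int[gauss2 R]_x (sigmoid (dot2 x bhat) * x.1)%:E
     = \int[gauss2 R]_x (Ebeta_sigmoid x * x.1)%:E)%E ->
  (\int[gauss2 R]_x (sigmoid (dot2 x bhat) * x.2)%:E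
     = \int[gauss2 R]_x (Ebeta_sigmoid x * x.2)%:E)%E ->
  ~ (exists c : R, bhat = scalev2 c betabar).
Proof.
move=> _ H2 [c hc]; subst bhat.
exact: (@main_contra R c H2).
Qed.
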